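(* In the setting described in the context, for every edge $\mathfrak e\in\mathcal E$ and all $\bar{\vec p},\bar{\vec q},\bar{\vec v},\bar{\vec w}\in(\mathds P_p(\mathfrak e))^3$, \begin{align*} (\epsilon^{\vec u}_{\mathfrak e},\partial_x\bar{\vec p})_{\mathfrak e}&=(C_{\vec n}^{-1}(\vec n-\bar{\vec n}_{\mathfrak e}),\bar{\vec p})_{\mathfrak e}+(\vec i_{\mathfrak e}\times(\vec r-\bar{\vec r}_{\mathfrak e}),\bar{\vec p})_{\mathfrak e}+\langle\vec u-\bar{\vec u}_{\mathfrak n},\bar{\vec p}\,\nu_{\mathfrak e}\rangle_{\mathfrak e},\\ (\epsilon^{\vec r}_{\mathfrak e},\partial_x\bar{\vec q})_{\mathfrak e}&=(C_{\vec m}^{-1}(\vec m-\bar{\vec m}_{\mathfrak e}),\bar{\vec q})_{\mathfrak e}+\langle\vec r-\bar{\vec r}_{\mathfrak n},\bar{\vec q}\,\nu_{\mathfrak e}\rangle_{\mathfrak e},\\ (\partial_x\epsilon^{\vec n}_{\mathfrak e},\bar{\vec v})_{\mathfrak e}&=\langle\tau_{\mathfrak e}(\bar{\vec u}_{\mathfrak e}-\bar{\vec u}_{\mathfrak n})-\theta^{\vec n}_{\mathfrak e}\nu_{\mathfrak e},\bar{\vec v}\rangle_{\mathfrak e},\\ (\partial_x\epsilon^{\vec m}_{\mathfrak e},\bar{\vec w})_{\mathfrak e}&=\langle\tau_{\mathfrak e}(\bar{\vec r}_{\mathfrak e}-\bar{\vec r}_{\mathfrak n})-\theta^{\vec m}_{\mathfrak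 e}\nu_{\mathfrak e},\bar{\vec w}\rangle_{\mathfrak e}-(\vec i_{\mathfrak e}\times(\vec n-\bar{\vec n}_{\mathfrak e}),\bar{\vec w})_{\mathfrak e}. \end{align*} Furthermore, for every node $\mathfrak n\in\mathcal N\setminus\mathcal N_{\mathrm D}$ and all $\vec v_{\mathfrak n},\vec w_{\mathfrak n}\in\mathbb R^3$, \[ 0=[\![\epsilon^{\vec n}_{\mathfrak e}\nu_{\mathfrak e}+\tau_{\mathfrak e}\epsilon^{\vec u}_{\mathfrak e}-\tau_{\mathfrak e}(\vec u-\bar{\vec u}_{\mathfrak n})]\!]_{\mathfrak n}\cdot\vec v_{\mathfrak n}+[\![\epsilon^{\vec m}_{\mathfrak e}\nu_{\mathfrak e}+\tau_{\mathfrak e}\epsilon^{\vec r}_{\mathfrak e}-\tau_{\mathfrak e}(\vec r-\bar{\vec r}_{\mathfrak n})]\!]_{\mathfrak n}\cdot\vec w_{\mathfrak n}. \]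
   Context: Network: $\mathcal G=(\mathcal N,\mathcal E)$ finite connected graph embedded in $\mathbb R^3$; each edge $\mathfrak e$ is the straight segment between distinct nodes $\mathfrak n_k,\mathfrak n_\ell$ ($k<\ell$), with length $h_{\mathfrak e}$, direction $\vec i_{\mathfrak e}=(\mathfrak n_\ell-\mathfrak n_k)/h_{\mathfrak e}$, normals $\nu_{\mathfrak e}(\mathfrak n_k)=-1$, $\nu_{\mathfrak e}(\mathfrak n_\ell)=+1$; $x$ arclength on $\mathfrak e$ increasing along $\vec i_{\mathfrak e}$, $\partial_x$ its derivative, $\times$ cross product. $C_{\vec n},C_{\vec m}$ symmetric $\mathbb R^{3\times3}$-valued functions on edges with uniform bounds $\alpha|\xi|^2\le(C\xi)\cdot\xi\le\beta|\xi|^2$, $0<\alpha,\beta<\infty$. $(\vec a,\vec b)_{\mathfrak e}=\int_{\mathfrak e}\vec a\cdot\vec b\,\mathrm d\sigma$, $\langle\vec a,\vec b\rangle_{\mathfrak e}=\sum_{\mathfrak n\text{ endpoint of }\mathfrak e}\vec a(\mathfrak n)\cdot\vec b(\mathfrak n)$ (also for nodal quantities). For edge quantities, $[\![q_{\mathfrak e}]\!]_{\mathfrak n}=\sum_{\mathfrak e\text{ adjacent to }\mathfrak n}q_{\mathfrak e}(\mathfrak n)$. A nonempty set $\mathcal N_{\mathrm D}\subset\mathcal N$ of Dirichlet nodes is fixed. Data: $\vec f_{\mathfrak e},\vec g_{\mathfrak e}\in(L^2(\mathfrak e))^3$ per edge, $\vec f_{\mathfrak n},\vec g_{\mathfrak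 n}\in\mathbb R^3$ per free node, $\vec u^{\mathrm D}_{\mathfrak n},\vec r^{\mathrm D}_{\mathfrak n}\in\mathbb R^3$ per Dirichlet node. Exact solution: $\vec u_{\mathfrak e},\vec r_{\mathfrak e}\in(L^2(\mathfrak e))^3$, $\vec n_{\mathfrak e},\vec m_{\mathfrak e}\in(H^1(\mathfrak e))^3$ per edge and $\vec u_{\mathfrak n},\vec r_{\mathfrak n}\in\mathbb R^3$ per node (unique) with $\vec u_{\mathfrak n}=\vec u^{\mathrm D}_{\mathfrak n}$, $\vec r_{\mathfrak n}=\vec r^{\mathrm D}_{\mathfrak n}$ on $\mathcal N_{\mathrm D}$, $[\![\vec n_{\mathfrak e}\nu_{\mathfrak e}]\!]_{\mathfrak n}=\vec f_{\mathfrak n}$, $[\![\vec m_{\mathfrak e}\nu_{\mathfrak e}]\!]_{\mathfrak n}=\vec g_{\mathfrak n}$ on $\mathcal N\setminus\mathcal N_{\mathrm D}$, and on each edge, for all $\vec p,\vec q\in(H^1(\mathfrak e))^3$, $\vec v,\vec w\in(L^2(\mathfrak e))^3$: $-(C_{\vec n}^{-1}\vec n_{\mathfrak e},\vec p)_{\mathfrak e}+(\vec u_{\mathfrak e},\partial_x\vec p)_{\mathfrak e}-(\vec i_{\mathfrak e}\times\vec r_{\mathfrak e},\vec p)_{\mathfrak e}=\langle\vec u_{\mathfrak n},\vec p\nu_{\mathfrak e}\rangle_{\mathfrak e}$; $-(C_{\vec m}^{-1}\vec m_{\mathfrak e},\vec q)_{\mathfrak e}+(\vec r_{\mathfrak e},\partial_x\vec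 q)_{\mathfrak e}=\langle\vec r_{\mathfrak n},\vec q\nu_{\mathfrak e}\rangle_{\mathfrak e}$; $(\partial_x\vec n_{\mathfrak e},\vec v)_{\mathfrak e}=(\vec f_{\mathfrak e},\vec v)_{\mathfrak e}$; $(\vec i_{\mathfrak e}\times\vec n_{\mathfrak e},\vec w)_{\mathfrak e}+(\partial_x\vec m_{\mathfrak e},\vec w)_{\mathfrak e}=(\vec g_{\mathfrak e},\vec w)_{\mathfrak e}$. Then $\vec u_{\mathfrak e},\vec r_{\mathfrak e}\in(H^1(\mathfrak e))^3$ with $\vec u_{\mathfrak e}(\mathfrak n)=\vec u_{\mathfrak n}$, $\vec r_{\mathfrak e}(\mathfrak n)=\vec r_{\mathfrak n}$; subscripts are dropped, writing $\vec u,\vec r,\vec n,\vec m$. HDG solution: fix $p\in\mathbb N$, $\tau_{\mathfrak e}>0$ per edge, $V_p^{\mathfrak e}=(\mathds P_p(\mathfrak e))^3$. $\bar{\vec u}_{\mathfrak e},\bar{\vec r}_{\mathfrak e},\bar{\vec n}_{\mathfrak e},\bar{\vec m}_{\mathfrak e}\in V_p^{\mathfrak e}$ per edge and $\bar{\vec u}_{\mathfrak n},\bar{\vec r}_{\mathfrak n}\in\mathbb R^3$ per node with $\bar{\vec u}_{\mathfrak n}=\vec u^{\mathrm D}_{\mathfrak n}$, $\bar{\vec r}_{\mathfrak n}=\vec r^{\mathrm D}_{\mathfrak n}$ on $\mathcal N_{\mathrm D}$; $[\![\bar{\vec n}_{\mathfrak e}\nu_{\mathfrak e}+\tau_{\mathfrak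 e}(\bar{\vec u}_{\mathfrak e}-\bar{\vec u}_{\mathfrak n})]\!]_{\mathfrak n}=\vec f_{\mathfrak n}$ and $[\![\bar{\vec m}_{\mathfrak e}\nu_{\mathfrak e}+\tau_{\mathfrak e}(\bar{\vec r}_{\mathfrak e}-\bar{\vec r}_{\mathfrak n})]\!]_{\mathfrak n}=\vec g_{\mathfrak n}$ on $\mathcal N\setminus\mathcal N_{\mathrm D}$; and on each edge, for all $\bar{\vec p},\bar{\vec q},\bar{\vec v},\bar{\vec w}\in V_p^{\mathfrak e}$: $-(C_{\vec n}^{-1}\bar{\vec n}_{\mathfrak e},\bar{\vec p})_{\mathfrak e}+(\bar{\vec u}_{\mathfrak e},\partial_x\bar{\vec p})_{\mathfrak e}-(\vec i_{\mathfrak e}\times\bar{\vec r}_{\mathfrak e},\bar{\vec p})_{\mathfrak e}=\langle\bar{\vec u}_{\mathfrak n},\bar{\vec p}\nu_{\mathfrak e}\rangle_{\mathfrak e}$; $-(C_{\vec m}^{-1}\bar{\vec m}_{\mathfrak e},\bar{\vec q})_{\mathfrak e}+(\bar{\vec r}_{\mathfrak e},\partial_x\bar{\vec q})_{\mathfrak e}=\langle\bar{\vec r}_{\mathfrak n},\bar{\vec q}\nu_{\mathfrak e}\rangle_{\mathfrak e}$; $(\partial_x\bar{\vec n}_{\mathfrak e},\bar{\vec v})_{\mathfrak e}+\tau_{\mathfrak e}\langle\bar{\vec u}_{\mathfrak e},\bar{\vec v}\rangle_{\mathfrak e}=(\vec f_{\mathfrak e},\bar{\vec v})_{\mathfrak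 e}+\tau_{\mathfrak e}\langle\bar{\vec u}_{\mathfrak n},\bar{\vec v}\rangle_{\mathfrak e}$; $(\vec i_{\mathfrak e}\times\bar{\vec n}_{\mathfrak e},\bar{\vec w})_{\mathfrak e}+(\partial_x\bar{\vec m}_{\mathfrak e},\bar{\vec w})_{\mathfrak e}+\tau_{\mathfrak e}\langle\bar{\vec r}_{\mathfrak e},\bar{\vec w}\rangle_{\mathfrak e}=(\vec g_{\mathfrak e},\bar{\vec w})_{\mathfrak e}+\tau_{\mathfrak e}\langle\bar{\vec r}_{\mathfrak n},\bar{\vec w}\rangle_{\mathfrak e}$. Projection: for $\vec a,\vec b\in(H^1(\mathfrak e))^3$, $\Pi(\vec a,\vec b)=(\Pi_1(\vec a,\vec b),\Pi_2(\vec a,\vec b))\in V_p^{\mathfrak e}\times V_p^{\mathfrak e}$ is the (well-defined) pair with $(\Pi_1(\vec a,\vec b),\bar{\vec v})_{\mathfrak e}=(\vec a,\bar{\vec v})_{\mathfrak e}$ and $(\Pi_2(\vec a,\vec b),\bar{\vec v})_{\mathfrak e}=(\vec b,\bar{\vec v})_{\mathfrak e}$ for all $\bar{\vec v}\in(\mathds P_{p-1}(\mathfrak e))^3$, and $\Pi_2(\vec a,\vec b)(\mathfrak n)\nu_{\mathfrak e}(\mathfrak n)+\tau_{\mathfrak e}\Pi_1(\vec a,\vec b)(\mathfrak n)=\vec b(\mathfrak n)\nu_{\mathfrak e}(\mathfrak n)+\tau_{\mathfrak e}\vec a(\mathfrak n)$ at both endpoints $\mathfrak n$. Errors: $\theta^{\vec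 u}_{\mathfrak e}=\vec u_{\mathfrak e}-\Pi_1(\vec u_{\mathfrak e},\vec n_{\mathfrak e})$, $\epsilon^{\vec u}_{\mathfrak e}=\Pi_1(\vec u_{\mathfrak e},\vec n_{\mathfrak e})-\bar{\vec u}_{\mathfrak e}$, $\theta^{\vec n}_{\mathfrak e}=\vec n_{\mathfrak e}-\Pi_2(\vec u_{\mathfrak e},\vec n_{\mathfrak e})$, $\epsilon^{\vec n}_{\mathfrak e}=\Pi_2(\vec u_{\mathfrak e},\vec n_{\mathfrak e})-\bar{\vec n}_{\mathfrak e}$, and analogously $\theta^{\vec r}_{\mathfrak e}=\vec r_{\mathfrak e}-\Pi_1(\vec r_{\mathfrak e},\vec m_{\mathfrak e})$, $\epsilon^{\vec r}_{\mathfrak e}=\Pi_1(\vec r_{\mathfrak e},\vec m_{\mathfrak e})-\bar{\vec r}_{\mathfrak e}$, $\theta^{\vec m}_{\mathfrak e}=\vec m_{\mathfrak e}-\Pi_2(\vec r_{\mathfrak e},\vec m_{\mathfrak e})$, $\epsilon^{\vec m}_{\mathfrak e}=\Pi_2(\vec r_{\mathfrak e},\vec m_{\mathfrak e})-\bar{\vec m}_{\mathfrak e}$. *)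

(* Defs.v *)
From HB Require Import structures.
From mathcomp Require Import all_boot all_order all_algebra.
From mathcomp Require Import all_classical all_reals all_analysis.
Set Implicit Arguments. Unset Strict Implicit. Unset Printing Implicit Defensive.
Import Order.TTheory GRing.Theory Num.Theory.
Local Open Scope classical_set_scope.
Local Open Scope ring_scope.

Section HDGDefs.
Variable R : realType.

Definition vec := 'cV[R]_3.
(* vector-valued polynomials in the arclength x *)
Definition vpoly := 'cV[{poly R}]_3.

Definition dot (a b : vec) : R := \sum_(i < 3) a i ord0 * b i ord0.

Definition cross (a b : vec) : vec :=
  \col_(i < 3)
    (if (i == 0 :> nat) then a 1 ord0 * b 2 ord0 - a 2 ord0 * b 1 ord0
     else if (i == 1 :> nat) then a 2 ord0 * b 0 ord0 - a 0 ord0 * b 2 ord0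
     else a 0 ord0 * b 1 ord0 - a 1 ord0 * b 0 ord0).

Definition vnorm (a : vec) : R := Num.sqrt (dot a a).

(* polynomial of degree <= k-1, i.e. each component has size <= k;
   (P_p = polyle p.+1, P_{p-1} = polyle p, with P_{-1} = {0}) *)
Definition polyle (k : nat) (P : vpoly) : Prop := forall i, (size (P i ord0) <= k)%N.

Definition veval (P : vpoly) (x : R) : vec := \col_i (P i ord0).[x].
Definition vderiv (P : vpoly) : vpoly := map_mx (@deriv R) P.

(* edge = [0,h] in arclength *)
Definition L2 (h : R) (f : R -> vec) : Prop :=
  forall i : 'I_3,
    measurable_fun `[0, h] (fun x => f x i ord0) /\
    (@lebesgue_measure R).-integrable `[0, h] (fun x => ((f x i ord0) ^+ 2)%:E).

(* f in H^1(0,h) with weak derivative df: f is (the continuous representative of)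
   an absolutely continuous function whose derivative df is in L^2 *)
Definition H1 (h : R) (f df : R -> vec) : Prop :=
  L2 h f /\ L2 h df /\
  forall x, 0 <= x <= h ->
    f x = f 0 + \col_(i < 3) Rintegral (@lebesgue_measure R) `[0, x] (fun t => df t i ord0).

Definition ip (h : R) (a b : R -> vec) : R :=
  Rintegral (@lebesgue_measure R) `[0, h] (fun x => dot (a x) (b x)).

(* endpoints of an edge: false = start node n_k (x = 0), true = end node n_l (x = h) *)
Definition xpt (h : R) (b : bool) : R := if b then h else 0.
Definition nu (b : bool) : R := if b then 1 else -1.

Definition bpair (A B : bool -> vec) : R := dot (A false) (B false) + dot (A true) (B true).

Section Graph.
Variables (N E : finType) (src tgt : E -> N).

Definition endnode (e : E) (b : bool) : N := if b then tgt e else src e.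

Definition jump (n : N) (F : E -> bool -> vec) : vec :=
  \sum_(e | src e == n) F e false + \sum_(e | tgt e == n) F e true.

Definition adjrel : rel N :=
  fun a b => [exists e, ((src e == a) && (tgt e == b)) || ((src e == b) && (tgt e == a))].

Definition graph_connected : Prop := forall a b : N, connect adjrel a b.
Variable pos : N -> vec.
Definition elen (e : E) : R := vnorm (pos (tgt e) - pos (src e)).
Definition edir (e : E) : vec := (elen e)^-1 *: (pos (tgt e) - pos (src e)).
End Graph.

Definition is_proj (p : nat) (tau h : R) (a b : R -> vec) (P1 P2 : vpoly) : Prop :=
  polyle p.+1 P1 /\ polyle p.+1 P2 /\
  (forall V, polyle p V ->
      ip h (veval P1) (veval V) = ip h a (veval V) /\
      ip h (veval P2) (veval V) = ip h b (veval V)) /\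
  (forall s : bool, nu s *: veval P2 (xpt h s) + tau *: veval P1 (xpt h s)
                    = nu s *: b (xpt h s) + tau *: a (xpt h s)).

End HDGDefs.
Arguments nu {R} b.

(* Main.v *)
Require Import Defs.
From HB Require Import structures.
From mathcomp Require Import all_boot all_order all_algebra.
From mathcomp Require Import all_classical all_reals all_analysis.
From mathcomp Require Import measurable_realfun.
From mathcomp Require Import lra ring.
Set Implicit Arguments. Unset Strict Implicit. Unset Printing Implicit Defensive.
Import Order.TTheory GRing.Theory Num.Theory.
Import numFieldNormedType.Exports.
Local Open Scope classical_set_scope.
Local Open Scope ring_scope.
Section Infra.
Variable R : realType.
Local Notation mu := (@lebesgue_measure R).
Implicit Types (h : R) (f g : R -> R).

Definition Int h f := mu.-integrable `[0, h] (EFin \o f).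
Definition BM h f := measurable_fun `[0, h] f /\ exists M, forall x, 0 <= x <= h -> `|f x| <= M.

Lemma mI h : measurable (`[0, h] : set R).
Proof. exact: measurable_itv. Qed.

Lemma muI h : (mu (`[0%R, h] : set R) < +oo)%E.
Proof. by rewrite lebesgue_measure_itv; case: ifP => _ //; rewrite -EFinD ltry. Qed.

Lemma BM_Int h f : BM h f -> Int h f.
Proof.
move=> [mf [M HM]]; apply: measurable_bounded_integrable => //; first exact: muI.
exists M; split; first exact: num_real.
move=> y My x Ax /=; apply: le_trans (HM x _) (ltW My); by move: Ax => /=; rewrite in_itv.
Qed.

Lemma Int_mulBl h f g : BM h f -> Int h g -> Int h (fun x => f x * g x).
Proof.
move=> [mf [M HM]] Ig.
have := @integrableMr _ _ _ mu _ (measurable_itv _) f (EFin \o g) mf.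
rewrite /Int.
have -> : (EFin \o (fun x => f x * g x)) = ((EFin \o f) \* (EFin \o g))%E.
  by apply/funext => x /=; rewrite EFinM.
apply => //; exists M; split; first exact: num_real.
move=> y My x Ax /=; apply: le_trans (HM x _) (ltW My); by move: Ax => /=; rewrite in_itv.
Qed.

Lemma Int_mulBr h f g : Int h f -> BM h g -> Int h (fun x => f x * g x).
Proof.
move=> If Bg; have := Int_mulBl Bg If.
by rewrite /Int; congr (_.-integrable _ _); apply/funext => x /=; rewrite mulrC.
Qed.

Lemma Int_add h f g : Int h f -> Int h g -> Int h (fun x => f x + g x).
Proof.
move=> If Ig; have := @integrableD _ _ _ mu _ (measurable_itv _) _ _ If Ig.
by rewrite /Int; congr (_.-integrable _ _); apply/funext => x /=; rewrite EFinD.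
Qed.

Lemma Int_sub h f g : Int h f -> Int h g -> Int h (fun x => f x - g x).
Proof.
move=> If Ig; have := @integrableB _ _ _ mu _ (measurable_itv _) _ _ If Ig.
by rewrite /Int; congr (_.-integrable _ _); apply/funext => x /=; rewrite EFinB.
Qed.

Lemma Int_scale h k f : Int h f -> Int h (fun x => k * f x).
Proof.
move=> If; have := @integrableZl _ _ _ mu _ (measurable_itv _) k _ If.
by rewrite /Int; congr (_.-integrable _ _); apply/funext => x /=; rewrite EFinM.
Qed.

Lemma Int_cst h k : Int h (fun _ => k).
Proof.
apply: BM_Int; split; first exact: measurable_cst.
by exists `|k|.
Qed.

Lemma Int_sum h (I : Type) (r : seq I) (F : I -> R -> R) :
  (forall i, Int h (F i)) -> Int h (fun x => \sum_(i <- r) F i x).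
Proof.
move=> HF; elim: r => [|a l IH].
  under eq_fun do rewrite big_nil; exact: Int_cst.
under eq_fun do rewrite big_cons; exact: Int_add.
Qed.

Lemma BM_add h f g : BM h f -> BM h g -> BM h (fun x => f x + g x).
Proof.
move=> [mf [M HM]] [mg [N HN]]; split; first exact: measurable_funD.
exists (M + N) => x Ax; apply: le_trans (ler_normD _ _) _; exact: lerD (HM x Ax) (HN x Ax).
Qed.

Lemma BM_mul h f g : BM h f -> BM h g -> BM h (fun x => f x * g x).
Proof.
move=> [mf [M HM]] [mg [N HN]]; split; first exact: measurable_funM.
exists (M * N) => x Ax; rewrite normrM; apply: ler_pM => //; [exact: HM | exact: HN].
Qed.

Lemma BM_cst h k : BM h (fun _ => k).
Proof. by split; [exact: measurable_cst | exists `|k|]. Qed.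

Lemma BM_sum h (I : Type) (r : seq I) (F : I -> R -> R) :
  (forall i, BM h (F i)) -> BM h (fun x => \sum_(i <- r) F i x).
Proof.
move=> HF; elim: r => [|a l IH].
  under eq_fun do rewrite big_nil; exact: BM_cst.
under eq_fun do rewrite big_cons; exact: BM_add.
Qed.

Lemma cont_BM h (f : R -> R) : continuous (f : R -> R) -> BM h f.
Proof.
move=> cf; split.
  apply: measurable_funTS; exact: continuous_measurable_fun.
have cfA : {within `[0, h], continuous f} by apply: continuous_subspaceT.
have /compact_bounded[M [_ mrt]] := continuous_compact cfA (@segment_compact R 0 h).
exists (`|M| + 1) => x Ax; apply: (mrt (`|M| + 1)).
  by apply: le_lt_trans (ler_norm M) _; rewrite ltrDl ltr01.
by exists x => //; rewrite /= in_itv.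
Qed.

Lemma poly_BM h (q : {poly R}) : BM h (horner q).
Proof. apply: cont_BM; exact: continuous_horner. Qed.

Lemma L2_Int h f : measurable_fun `[0, h] f -> Int h (fun x => f x ^+ 2) -> Int h f.
Proof.
move=> mf I2; apply: (@le_integrable _ _ _ mu _ (measurable_itv _) _ (EFin \o (fun x => 1 + f x ^+ 2))).
- exact/measurable_EFinP.
- move=> x _ /=; rewrite lee_fin.
  rewrite [X in _ <= X]ger0_norm; last by rewrite addr_ge0 // sqr_ge0.
  have H0 := normr_ge0 (f x).
  rewrite -[f x ^+ 2](real_normK (num_real (f x))).
  nra.
- apply: Int_add => //; exact: Int_cst.
Qed.

End Infra.
Section P2.
Variable R : realType.
Local Notation mu := (@lebesgue_measure R).
Lemma ftc_poly (q : {poly R}) (a b : R) : a <= b ->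
  \int[mu]_(x in `[a, b]) (q^`()).[x] = q.[b] - q.[a].
Proof.
rewrite le_eqVlt => /orP[/eqP <-|ab].
  by rewrite set_itv1 Rintegral_set1 subrr.
rewrite /Rintegral (@continuous_FTC2 R (horner q^`()) (horner q) a b ab) /=.
- done.
- apply: continuous_subspaceT; exact: continuous_horner.
- split.
  + move=> x _; exact: derivable_horner.
  + apply: cvg_at_right_filter; exact: continuous_horner.
  + apply: cvg_at_left_filter; exact: continuous_horner.
- by move=> x _; rewrite -derivE.
Qed.
End P2.
Section Vec.
Variable R : realType.
Local Notation mu := (@lebesgue_measure R).
Implicit Types (h : R).

Lemma dotBl (a b c : vec R) : dot (a - b) c = dot a c - dot b c.
Proof. by rewrite /dot -sumrB; apply: eq_bigr => i _; rewrite !mxE mulrBl. Qed.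
Lemma dotDl (a b c : vec R) : dot (a + b) c = dot a c + dot b c.
Proof. by rewrite /dot -big_split; apply: eq_bigr => i _; rewrite !mxE mulrDl. Qed.
Lemma dotZl k (a c : vec R) : dot (k *: a) c = k * dot a c.
Proof. by rewrite /dot mulr_sumr; apply: eq_bigr => i _; rewrite !mxE mulrA. Qed.
Lemma dotNl (a c : vec R) : dot (- a) c = - dot a c.
Proof. by rewrite /dot -sumrN; apply: eq_bigr => i _; rewrite !mxE mulNr. Qed.
Lemma dot0l (c : vec R) : dot 0 c = 0.
Proof. by rewrite /dot big1 // => i _; rewrite mxE mul0r. Qed.
Lemma dotC (a c : vec R) : dot a c = dot c a.
Proof. by rewrite /dot; apply: eq_bigr => i _; rewrite mulrC. Qed.

Lemma Rint_sum h (I : Type) (r : seq I) (F : I -> R -> R) :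
  (forall i, Int h (F i)) ->
  \int[mu]_(x in `[0, h]) (\sum_(i <- r) F i x) = \sum_(i <- r) \int[mu]_(x in `[0, h]) F i x.
Proof.
move=> HF; elim: r => [|a l IH].
  rewrite big_nil.
  have -> : (fun x => \sum_(i <- [::]) F i x) = (fun _ => 0) by apply/funext => x; rewrite big_nil.
  by rewrite (@Rintegral_cst _ _ _ mu) ?mul0r //; exact: measurable_itv.
rewrite big_cons -IH.
have -> : (fun x => \sum_(i <- a :: l) F i x) = (fun x => F a x + \sum_(i <- l) F i x).
  by apply/funext => x; rewrite big_cons.
by rewrite (@RintegralD _ _ _ mu _ _ _ (measurable_itv _) (HF a) (Int_sum _ HF)).
Qed.

Definition VI h (a : R -> vec R) := forall i, Int h (fun x => a x i ord0).
Definition VB h (a : R -> vec R) := forall i, BM h (fun x => a x i ord0).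

Lemma VB_VI h (a : R -> vec R) : VB h a -> VI h a.
Proof. by move=> H i; apply: BM_Int. Qed.

Lemma Int_dot h (a b : R -> vec R) : VI h a -> VB h b -> Int h (fun x => dot (a x) (b x)).
Proof. by move=> Ha Hb; rewrite /dot; apply: Int_sum => i; apply: Int_mulBr. Qed.

Lemma ipB_l h (a b c : R -> vec R) : Int h (fun x => dot (a x) (c x)) -> Int h (fun x => dot (b x) (c x)) ->
  ip h (fun x => a x - b x) c = ip h a c - ip h b c.
Proof.
move=> Ha Hb; rewrite /ip -(@RintegralB _ _ _ mu _ _ _ (measurable_itv _) Ha Hb).
by congr Rintegral; apply/funext => x; rewrite dotBl.
Qed.

Lemma ip_split h (a b : R -> vec R) : (forall i, Int h (fun x => a x i ord0 * b x i ord0)) ->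
  ip h a b = \sum_(i < 3) \int[mu]_(x in `[0, h]) (a x i ord0 * b x i ord0).
Proof. by move=> H; rewrite /ip /dot Rint_sum. Qed.

Lemma BM_sub h f g : BM h f -> BM h g -> BM h (fun x => f x - g x).
Proof.
move=> Bf Bg; have -> : (fun x => f x - g x) = (fun x => f x + (-1) * g x).
  by apply/funext => x; rewrite mulN1r.
by apply: BM_add => //; apply: BM_mul => //; exact: BM_cst.
Qed.

Lemma veval_entry (P : vpoly R) x i : veval P x i ord0 = (P i ord0).[x].
Proof. by rewrite /veval mxE. Qed.

Lemma VB_poly h (P : vpoly R) : VB h (veval P).
Proof.
move=> i; have -> : (fun x => veval P x i ord0) = horner (P i ord0).
  by apply/funext => x; rewrite veval_entry.
exact: poly_BM.
Qed.

Lemma VI_L2 h (a : R -> vec R) : L2 h a -> VI h a.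
Proof. by move=> H i; have [m2 i2] := H i; apply: L2_Int. Qed.

Lemma cross_entry (d a : vec R) (i : 'I_3) : cross d a i ord0 =
   (if (i == 0 :> nat) then d 1 ord0 * a 2 ord0 - d 2 ord0 * a 1 ord0
     else if (i == 1 :> nat) then d 2 ord0 * a 0 ord0 - d 0 ord0 * a 2 ord0
     else d 0 ord0 * a 1 ord0 - d 1 ord0 * a 0 ord0).
Proof. by rewrite /cross mxE. Qed.

Lemma VI_cross h (d : vec R) (a : R -> vec R) : VI h a -> VI h (fun x => cross d (a x)).
Proof.
rewrite /VI /VB => Ha i; rewrite /cross; under eq_fun do rewrite mxE.
by case: (i == 0 :> nat); [|case: (i == 1 :> nat)]; apply: Int_sub; apply: Int_scale.
Qed.

Lemma VB_cross h (d : vec R) (a : R -> vec R) : VB h a -> VB h (fun x => cross d (a x)).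
Proof.
rewrite /VI /VB => Ha i; rewrite /cross; under eq_fun do rewrite mxE.
by case: (i == 0 :> nat); [|case: (i == 1 :> nat)]; apply: BM_sub; apply: BM_mul => //; apply: BM_cst.
Qed.

Lemma crossBr (d a b : vec R) : cross d (a - b) = cross d a - cross d b.
Proof.
apply/matrixP => i j; rewrite !mxE.
by case: ifP => _; [|case: ifP => _]; rewrite ?mxE; ring.
Qed.

Lemma VI_mul h (M : R -> 'M[R]_3) (a : R -> vec R) : (forall i j, BM h (fun x => M x i j)) -> VI h a ->
  VI h (fun x => M x *m a x).
Proof.
rewrite /VI /VB => HM Ha i; under eq_fun do rewrite mxE.
by apply: Int_sum => j; apply: Int_mulBl.
Qed.

Lemma VB_mul h (M : R -> 'M[R]_3) (a : R -> vec R) : (forall i j, BM h (fun x => M x i j)) -> VB h a ->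
  VB h (fun x => M x *m a x).
Proof.
rewrite /VI /VB => HM Ha i; under eq_fun do rewrite mxE.
by apply: BM_sum => j; apply: BM_mul.
Qed.

Lemma veval_sub (A B : vpoly R) : veval (A - B) = (fun x => veval A x - veval B x).
Proof. by apply/funext => x; apply/matrixP => i j; rewrite !mxE hornerD hornerN. Qed.

Lemma vderiv_sub (A B : vpoly R) : vderiv (A - B) = vderiv A - vderiv B.
Proof. by apply/matrixP => i j; rewrite !mxE derivB. Qed.

End Vec.
Section Cinv.
Variable R : realType.
Implicit Types (h : R).

Lemma inv_meas : measurable_fun [set: R] (@GRing.inv R).
Proof.
rewrite -(setUv [set (0:R)]); apply/measurable_funU => //.
  exact: measurableC.
split.
  apply: (@eq_measurable_fun _ _ _ _ _ (cst (0:R))); last exact: measurable_cst.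
  by move=> x; rewrite inE /= => ->; rewrite invr0.
apply: subspace_continuous_measurable_fun; first exact: measurableC.
apply: continuous_in_subspaceT => x; rewrite inE /= => /eqP x0.
exact: inv_continuous.
Qed.

Lemma det_meas (D : set R) n (A : R -> 'M[R]_n) :
  (forall i j, measurable_fun D (fun x => A x i j)) -> measurable_fun D (fun x => \det (A x)).
Proof.
move=> HA; rewrite /determinant.
apply: measurable_sum => s; apply: measurable_funM; first exact: measurable_cst.
by apply: measurable_prod => i _; apply: HA.
Qed.

Lemma adj_meas (D : set R) n (A : R -> 'M[R]_n.+1) i j :
  (forall i j, measurable_fun D (fun x => A x i j)) -> measurable_fun D (fun x => \adj (A x) i j).
Proof.
move=> HA; under eq_fun do rewrite mxE /cofactor.
apply: measurable_funM; first exact: measurable_cst.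
by apply: det_meas => k l; under eq_fun do rewrite !mxE; apply: HA.
Qed.

Lemma dot_sq_le (y : vec R) k : y k ord0 ^+ 2 <= dot y y.
Proof.
rewrite /dot (bigD1 k) //= expr2 lerDl; apply: sumr_ge0 => i _; rewrite -expr2; exact: sqr_ge0.
Qed.

Lemma dot_delta (j : 'I_3) (y : vec R) : dot (delta_mx j 0) y = y j ord0.
Proof.
rewrite /dot (bigD1 j) //= big1 ?addr0.
  by rewrite mxE eqxx /= mul1r.
by move=> i /negbTE ij; rewrite mxE ij mul0r.
Qed.

Lemma Cunit (alpha : R) (C : 'M[R]_3) : 0 < alpha -> C^T = C ->
  (forall xi : vec R, alpha * dot xi xi <= dot (C *m xi) xi) -> C \in unitmx.
Proof.
move=> ha hs hc; rewrite unitmxE unitfE; apply/negP => /det0P [v v0 vC].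
have Cv : C *m v^T = 0 by rewrite -[C]hs -trmx_mul vC trmx0.
have := hc v^T; rewrite Cv dot0l => h1.
have hd : dot v^T v^T = 0.
  apply/eqP; rewrite eq_le; apply/andP; split.
    by rewrite -(pmulr_rle0 _ ha).
  by apply: sumr_ge0 => i _; rewrite -expr2 sqr_ge0.
move/eqP: v0; apply; apply/matrixP => i j.
have -> : i = ord0 by apply/val_inj; case: i => [[]].
move: hd; rewrite /dot => /eqP; rewrite psumr_eq0; last by move=> k _; rewrite -expr2 sqr_ge0.
move=> /allP /(_ j (mem_index_enum _)) /=; rewrite mulf_eq0 orbb !mxE => /eqP ->.
by rewrite ?mxE.
Qed.

Lemma Cinv_bound (alpha : R) (C : 'M[R]_3) : 0 < alpha -> C^T = C ->
  (forall xi : vec R, alpha * dot xi xi <= dot (C *m xi) xi) ->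
  forall i j, `|invmx C i j| <= alpha^-1.
Proof.
move=> ha hs hc i j.
have hu := Cunit ha hs hc.
set y : vec R := invmx C *m delta_mx j 0.
have yij : y i ord0 = invmx C i j by rewrite /y -colE mxE.
have Cy : C *m y = delta_mx j 0 by rewrite /y mulmxA mulmxV // mul1mx.
have h1 := hc y; rewrite Cy dot_delta in h1.
have h2 := dot_sq_le y j; have h3 := dot_sq_le y i.
rewrite -yij.
set S := dot y y in h1 h2 h3; set a := y j ord0 in h1 h2; set b := y i ord0 in h3 *.
have S0 : 0 <= S by apply: le_trans (sqr_ge0 _) h3.
have hb : alpha ^+ 2 * b ^+ 2 <= 1.
  have [SE|Spos] := eqVneq S 0.
    have : b ^+ 2 = 0 by apply/eqP; rewrite eq_le; apply/andP; split; [by rewrite -SE | exact: sqr_ge0].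
    by move=> ->; rewrite mulr0 ler01.
  have Sp : 0 < S by rewrite lt_def Spos S0.
  have h4 : (alpha * S) ^+ 2 <= a ^+ 2.
    rewrite ler_sqr ?nnegrE //; first exact: mulr_ge0 (ltW ha) S0.
    exact: le_trans (mulr_ge0 (ltW ha) S0) h1.
  have h5 : alpha ^+ 2 * S <= 1.
    rewrite -(ler_pM2l Sp) mulr1; apply: le_trans _ (le_trans h4 h2).
    by rewrite [X in X <= _](_ : _ = (alpha * S) ^+ 2) //; ring.
  apply: le_trans _ h5; apply: ler_wpM2l => //; exact: sqr_ge0.
rewrite -(ler_pM2l ha) mulfV ?gt_eqF //.
have hn : 0 <= alpha * `|b| by rewrite mulr_ge0 // ltW.
by rewrite -(ler_sqr hn ler01) ?nnegrE // exprMn real_normK ?num_real // expr1n.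
Qed.

End Cinv.
Section Poly.
Variable R : realType.
Local Notation mu := (@lebesgue_measure R).
Implicit Types (h : R).

Lemma Cinv_BM h (alpha : R) (C : R -> 'M[R]_3) : 0 < alpha -> (forall x, (C x)^T = C x) ->
  (forall x, 0 <= x <= h -> forall xi : vec R, alpha * dot xi xi <= dot (C x *m xi) xi) ->
  (forall i j, measurable_fun `[0, h] (fun x => C x i j)) ->
  forall i j, BM h (fun x => invmx (C x) i j).
Proof.
move=> ha hs hc hm i j; split; last first.
  by exists alpha^-1 => x hx; apply: Cinv_bound ha (hs x) (hc x hx) i j.
apply: (@eq_measurable_fun _ _ _ _ _ (fun x => (\det (C x))^-1 * \adj (C x) i j)).
  move=> x; rewrite inE /= in_itv /= => hx.
  by rewrite /invmx (Cunit ha (hs x) (hc x hx)) [RHS]mxE.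
apply: measurable_funM.
  apply: measurableT_comp; first exact: inv_meas.
  exact: det_meas.
exact: adj_meas.
Qed.

Lemma vderiv_entry (P : vpoly R) i : vderiv P i ord0 = (P i ord0)^`().
Proof. by rewrite /vderiv mxE. Qed.

Lemma L2_poly h (P : vpoly R) : L2 h (veval P).
Proof.
move=> i; have [m _] := VB_poly h P i; split => //.
have : Int h (fun x => veval P x i ord0 ^+ 2).
  by apply: BM_Int; rewrite /GRing.exp /=; apply: BM_mul; apply: VB_poly.
by [].
Qed.

Lemma H1_poly h (P : vpoly R) : H1 h (veval P) (veval (vderiv P)).
Proof.
split; first exact: L2_poly.
split; first exact: L2_poly.
move=> x /andP [x0 xh]; apply/matrixP => i j; rewrite !mxE.
have -> : (fun t => veval (vderiv P) t i ord0) = horner ((P i ord0)^`()).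
  by apply/funext => t; rewrite veval_entry vderiv_entry.
by rewrite ftc_poly // addrC subrK.
Qed.

End Poly.
Section Fub.
Variable R : realType.
Local Notation mu := (@lebesgue_measure R).
Implicit Types (h : R).

Lemma memI (x a b : R) : (x \in (`[a, b]%classic : set R)) = (a <= x <= b).
Proof. by apply/idP/idP; rewrite inE /= in_itv. Qed.

Lemma Int_meas h f : Int h f -> measurable_fun `[0, h] f.
Proof. by move=> /measurable_int /measurable_EFinP. Qed.

Lemma Int_restrict h f : Int h f -> mu.-integrable setT (EFin \o (f \_ `[0, h])).
Proof. by move=> If; rewrite -restrict_EFin; exact: (proj1 (@integrable_mkcond _ _ _ mu _ _ (measurable_itv _)) If).
Qed.

Lemma Int_sub_itv h f (a b : R) : 0 <= a -> b <= h -> Int h f ->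
  mu.-integrable `[a, b] (EFin \o f).
Proof.
move=> a0 bh If; apply: integrableS If => //; try exact: measurable_itv.
move=> x /=; rewrite !in_itv /= => /andP [ax xb]; apply/andP; split.
  exact: le_trans ax.
exact: le_trans bh.
Qed.

Lemma Rint_fin (D : set R) f : measurable D -> mu.-integrable D (EFin \o f) ->
  (\int[mu]_(x in D) (f x)%:E)%E = (\int[mu]_(x in D) f x)%:E.
Proof. by move=> mD If; rewrite /Rintegral fineK //; exact: integrable_fin_num. Qed.


Lemma fubini_core h (df g : R -> R) : Int h df -> BM h g ->
  \int[mu]_(x in `[0, h]) (g x * \int[mu]_(t in `[0, x]) df t)
  = \int[mu]_(t in `[0, h]) (df t * \int[mu]_(x in `[t, h]) g x).
Proof.
move=> Idf Bg.
have Ig := BM_Int Bg.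
have mI : measurable (`[0, h]%classic : set R) by exact: measurable_itv.
pose dI := df \_ `[0, h]. pose gI := g \_ `[0, h].
have mdI : measurable_fun setT dI by apply/(measurable_restrictT _ mI); exact: Int_meas.
have mgI : measurable_fun setT gI by apply/(measurable_restrictT _ mI); exact: Bg.1.
pose kr := fun z : R * R => if z.2 <= z.1 then gI z.1 * dI z.2 else 0.
have mk : measurable_fun setT kr.
  apply: measurable_fun_ifT.
  - exact: measurable_fun_ler measurable_snd measurable_fst.
  - apply: measurable_funM.
      exact: measurableT_comp mgI measurable_fst.
    exact: measurableT_comp mdI measurable_snd.
  - exact: measurable_cst.
have iK : (mu \x mu)%E.-integrable setT (EFin \o kr).
  apply/integrableP; split; first exact/measurable_EFinP.
  pose b := fun z : R * R => (`|gI z.1| * `|dI z.2|)%:E.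
  have mb : measurable_fun setT b.
    apply/measurable_EFinP; apply: measurable_funM; apply: measurableT_comp => //.
      exact: measurableT_comp mgI measurable_fst.
    exact: measurableT_comp mdI measurable_snd.
  apply: (@le_lt_trans _ _ (\int[(mu \x mu)%E]_z b z)%E).
    apply: ge0_le_integral => //.
    - apply: measurableT_comp => //; exact/measurable_EFinP.
    - move=> z _; rewrite /b /kr /comp /=; case: ifP => _; rewrite lee_fin ?normrM //.
      by rewrite normr0; apply: mulr_ge0.
  rewrite fubini_tonelli1 //; last by move=> z; rewrite lee_fin; apply: mulr_ge0.
  rewrite /fubini_F /=.
  have /integrableP [_ Afin] := Int_restrict Idf.
  have /integrableP [_ Gfin] := Int_restrict Ig.
  set A := (\int[mu]_y _)%E in Afin.
  set G := (\int[mu]_y _)%E in Gfin.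
  have inner : forall x, (\int[mu]_y b (x, y) = `|gI x|%:E * A)%E.
    move=> x; rewrite /b /=.
    under eq_integral do rewrite EFinM.
    by rewrite ge0_integralZl //; apply/measurable_EFinP; apply: measurableT_comp => //.
  under eq_integral do rewrite inner.
  rewrite ge0_integralZr //.
  - apply: lte_mul_pinfty => //.
    + by apply: integral_ge0 => x _; rewrite lee_fin.
    + rewrite ge0_fin_numE //; by apply: integral_ge0 => x _; rewrite lee_fin.
  - apply/measurable_EFinP; apply: measurableT_comp => //.
  - by apply: integral_ge0 => x _; rewrite lee_fin.
have FE := Fubini iK.
have L : (\int[mu]_(x in `[0%R, h]) ((g x * \int[mu]_(t in `[0%R, x]) df t)%:E)
          = \int[mu]_x \int[mu]_y (EFin \o kr) (x, y))%E.
  rewrite integral_mkcond; apply: eq_integral => x _.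
  rewrite patchE; case: ifPn => xI.
    have hx : 0 <= x <= h by rewrite -memI.
    case/andP: hx => x0 xh.
    have E1 : (fun y => (EFin \o kr) (x, y))
              = (fun y => ((g x)%:E * (EFin \o (df \_ `[0%R, x])) y)%E).
      apply/funext => y; rewrite /kr /gI /dI /comp /= !patchE !memI x0 xh /=.
      case: (boolP (y <= x)) => yx; case: (boolP (0 <= y)) => y0 /=;
        rewrite ?(le_trans yx xh) ?mulr0 ?mule0 //.
    rewrite E1 integralZl //; last first.
      rewrite -restrict_EFin.
      exact: (proj1 (@integrable_mkcond _ _ _ mu _ _ (measurable_itv _)) (Int_sub_itv (lexx 0) xh Idf)).
    by rewrite -restrict_EFin -integral_mkcond (Rint_fin (measurable_itv _) (Int_sub_itv (lexx 0) xh Idf)) EFinM.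
  have -> : (fun y => (EFin \o kr) (x, y)) = (fun y => 0%E).
    apply/funext => y; rewrite /kr /gI /comp /= patchE (negbTE xI).
    by case: ifP => _; rewrite ?mul0r.
  by rewrite integral0.
have Rr : (\int[mu]_(t in `[0%R, h]) ((df t * \int[mu]_(x in `[t, h]) g x)%:E)
          = \int[mu]_y \int[mu]_x (EFin \o kr) (x, y))%E.
  rewrite integral_mkcond; apply: eq_integral => t _.
  rewrite patchE; case: ifPn => tI.
    have ht : 0 <= t <= h by rewrite -memI.
    case/andP: ht => t0 th.
    have E1 : (fun x => (EFin \o kr) (x, t))
              = (fun x => ((df t)%:E * (EFin \o (g \_ `[t, h])) x)%E).
      apply/funext => x; rewrite /kr /gI /dI /comp /= !patchE !memI t0 th /=.
      case: (boolP (t <= x)) => tx /=; rewrite ?mulr0 ?mule0 //.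
      by rewrite (le_trans t0 tx) /= mulrC.
    rewrite E1 integralZl //; last first.
      rewrite -restrict_EFin.
      exact: (proj1 (@integrable_mkcond _ _ _ mu _ _ (measurable_itv _)) (Int_sub_itv t0 (lexx h) Ig)).
    by rewrite -restrict_EFin -integral_mkcond (Rint_fin (measurable_itv _) (Int_sub_itv t0 (lexx h) Ig)) EFinM.
  have -> : (fun x => (EFin \o kr) (x, t)) = (fun x => 0%E).
    apply/funext => x; rewrite /kr /dI /comp /= patchE (negbTE tI).
    by case: ifP => _; rewrite ?mulr0.
  by rewrite integral0.
by rewrite /Rintegral L Rr FE.
Qed.

End Fub.
Section IBP.
Variable R : realType.
Local Notation mu := (@lebesgue_measure R).
Implicit Types (h : R).

Lemma ibp_scalar h (f df : R -> R) (q : {poly R}) : 0 <= h -> Int h f -> Int h df ->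
  (forall x, 0 <= x <= h -> f x = f 0 + \int[mu]_(t in `[0, x]) df t) ->
  \int[mu]_(x in `[0, h]) (f x * (q^`()).[x])
  = f h * q.[h] - f 0 * q.[0] - \int[mu]_(x in `[0, h]) (df x * q.[x]).
Proof.
move=> h0 If Idf hf.
set F := fun x => \int[mu]_(t in `[0, x]) df t.
have Iq' : Int h (horner q^`()) by apply: BM_Int; exact: poly_BM.
have IfF : Int h (fun x => (q^`()).[x] * F x).
  have I1 : Int h (fun x => f x * (q^`()).[x] - f 0 * (q^`()).[x]).
    by apply: Int_sub; [apply: Int_mulBr => //; exact: poly_BM | exact: Int_scale].
  apply: (@eq_integrable _ _ _ mu _ (measurable_itv _) _ _ _ I1).
  move=> x; rewrite memI => hx /=; rewrite (hf x hx) /F; congr EFin; ring.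
have e1 : \int[mu]_(x in `[0, h]) (f x * (q^`()).[x])
        = \int[mu]_(x in `[0, h]) (f 0 * (q^`()).[x] + (q^`()).[x] * F x).
  apply: eq_Rintegral => x; rewrite memI => hx; rewrite (hf x hx) /F; ring.
rewrite e1 (@RintegralD _ _ _ mu _ _ _ (measurable_itv _) (Int_scale (f 0) Iq') IfF).
rewrite (@RintegralZl _ _ _ mu _ _ _ (measurable_itv _) Iq') ftc_poly //.
rewrite /F fubini_core //; last exact: poly_BM.
have e2 : \int[mu]_(t in `[0, h]) (df t * \int[mu]_(x in `[t, h]) (q^`()).[x])
        = \int[mu]_(t in `[0, h]) (q.[h] * df t - df t * q.[t]).
  apply: eq_Rintegral => t; rewrite memI => /andP [t0 th]; rewrite ftc_poly //; ring.
have Idq : Int h (fun x => df x * q.[x]) by apply: Int_mulBr => //; exact: poly_BM.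
rewrite e2 (@RintegralB _ _ _ mu _ _ _ (measurable_itv _) (Int_scale q.[h] Idf) Idq).
rewrite (@RintegralZl _ _ _ mu _ _ _ (measurable_itv _) Idf).
have fh := hf h; rewrite lexx h0 /= in fh; have := fh erefl.
rewrite /= => ->; ring.
Qed.

End IBP.
Section IBPV.
Variable R : realType.
Local Notation mu := (@lebesgue_measure R).
Implicit Types (h : R).

Lemma ibp_vec h (f df : R -> vec R) (V : vpoly R) : 0 <= h -> H1 h f df ->
  ip h f (veval (vderiv V))
  = bpair (fun s => nu s *: f (xpt h s)) (fun s => veval V (xpt h s)) - ip h df (veval V).
Proof.
move=> h0 [L2f [L2df hf]].
have VIf := VI_L2 L2f; have VIdf := VI_L2 L2df.
have comp : forall i : 'I_3,
  \int[mu]_(x in `[0, h]) (f x i ord0 * veval (vderiv V) x i ord0)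
  = f h i ord0 * (V i ord0).[h] - f 0 i ord0 * (V i ord0).[0]
    - \int[mu]_(x in `[0, h]) (df x i ord0 * veval V x i ord0).
  move=> i.
  have -> : (fun x => f x i ord0 * veval (vderiv V) x i ord0)
            = (fun x => f x i ord0 * ((V i ord0)^`()).[x]).
    by apply/funext => x; rewrite veval_entry vderiv_entry.
  have -> : (fun x => df x i ord0 * veval V x i ord0)
            = (fun x => df x i ord0 * (V i ord0).[x]).
    by apply/funext => x; rewrite veval_entry.
  apply: (ibp_scalar (f := fun x => f x i ord0)) => //.
  move=> x hx; have := congr1 (fun M : vec R => M i ord0) (hf x hx).
  by rewrite /= !mxE.
rewrite (ip_split (a := f)); last by move=> i; apply: Int_mulBr => //; apply: VB_poly.
rewrite (ip_split (a := df)); last by move=> i; apply: Int_mulBr => //; apply: VB_poly.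
rewrite /bpair /dot /= -big_split -sumrB /=; apply: eq_bigr => i _.
rewrite comp !mxE; ring.
Qed.

End IBPV.
Section MainAux.
Variable R : realType.

Lemma polyle_deriv p (V : vpoly R) : polyle p.+1 V -> polyle p (vderiv V).
Proof.
move=> HV i; rewrite vderiv_entry; have hs := HV i.
have [->|nz] := eqVneq (V i ord0) 0; first by rewrite deriv0 size_poly0.
by have lt := lt_size_deriv nz; rewrite -ltnS; exact: leq_trans lt hs.
Qed.

Lemma bpairBl (A B C : bool -> vec R) :
  bpair (fun s => A s - B s) C = bpair A C - bpair B C.
Proof. by rewrite /bpair !dotBl; ring. Qed.

Lemma jumpB (N E : finType) (src tgt : E -> N) a (G1 G2 : E -> bool -> vec R) :
  jump src tgt a (fun e s => G1 e s - G2 e s) = jump src tgt a G1 - jump src tgt a G2.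
Proof. by rewrite /jump !sumrB opprD addrACA. Qed.

End MainAux.

Theorem lemma4p2
  (R : realType)
  (* network: nodes numbered 0..K-1, edge e joins src e = n_k to tgt e = n_l, k < l *)
  (K : nat) (E : finType) (src tgt : E -> 'I_K) (pos : 'I_K -> vec R)
  (Horient : forall e, (src e < tgt e)%N)
  (Hembed : injective pos)
  (Hconn : graph_connected src tgt)
  (ND : {set 'I_K}) (HND : exists a, a \in ND)
  (* material tensors *)
  (Cn Cm : E -> R -> 'M[R]_3) (alpha beta : R) (Halpha : 0 < alpha) (Hbeta : 0 < beta)
  (HCsym : forall e x, (Cn e x)^T = Cn e x /\ (Cm e x)^T = Cm e x)
  (HCmeas : forall e (i j : 'I_3),
      measurable_fun `[0, elen src tgt pos e] (fun x => Cn e x i j) /\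
      measurable_fun `[0, elen src tgt pos e] (fun x => Cm e x i j))
  (HCbnd : forall e x (xi : vec R), 0 <= x <= elen src tgt pos e ->
      alpha * dot xi xi <= dot (Cn e x *m xi) xi <= beta * dot xi xi /\
      alpha * dot xi xi <= dot (Cm e x *m xi) xi <= beta * dot xi xi)
  (* data *)
  (fe ge : E -> R -> vec R)
  (Hfe : forall e, L2 (elen src tgt pos e) (fe e) /\ L2 (elen src tgt pos e) (ge e))
  (fn gn uD rD : 'I_K -> vec R)
  (* exact solution; dn, dm are the weak derivatives of n, m *)
  (u r n m dn dm : E -> R -> vec R) (un rn : 'I_K -> vec R)
  (Hureg : forall e, L2 (elen src tgt pos e) (u e) /\ L2 (elen src tgt pos e) (r e))
  (Hnreg : forall e, H1 (elen src tgt pos e) (n e) (dn e) /\ H1 (elen src tgt pos e) (m e) (dm e))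
  (HexD : forall a, a \in ND -> un a = uD a /\ rn a = rD a)
  (HexJ : forall a, a \notin ND ->
      jump src tgt a (fun e s => nu s *: n e (xpt (elen src tgt pos e) s)) = fn a /\
      jump src tgt a (fun e s => nu s *: m e (xpt (elen src tgt pos e) s)) = gn a)
  (Hex1 : forall e pp dpp, H1 (elen src tgt pos e) pp dpp ->
      - ip (elen src tgt pos e) (fun x => invmx (Cn e x) *m n e x) pp
      + ip (elen src tgt pos e) (u e) dpp
      - ip (elen src tgt pos e) (fun x => cross (edir src tgt pos e) (r e x)) pp
      = bpair (fun s => un (endnode src tgt e s))
              (fun s => nu s *: pp (xpt (elen src tgt pos e) s)))
  (Hex2 : forall e qq dqq, H1 (elen src tgt pos e) qq dqq ->
      - ip (elen src tgt pos e) (fun x => invmx (Cm e x) *m m e x) qq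
      + ip (elen src tgt pos e) (r e) dqq
      = bpair (fun s => rn (endnode src tgt e s))
              (fun s => nu s *: qq (xpt (elen src tgt pos e) s)))
  (Hex3 : forall e v, L2 (elen src tgt pos e) v ->
      ip (elen src tgt pos e) (dn e) v = ip (elen src tgt pos e) (fe e) v)
  (Hex4 : forall e w, L2 (elen src tgt pos e) w ->
      ip (elen src tgt pos e) (fun x => cross (edir src tgt pos e) (n e x)) w
      + ip (elen src tgt pos e) (dm e) w = ip (elen src tgt pos e) (ge e) w)
  (* consequence of the exact system recorded in the context: u, r in H^1 with traces u_n, r_n *)
  (Hutrace : forall e,
      (exists du, H1 (elen src tgt pos e) (u e) du) /\
      (exists dr, H1 (elen src tgt pos e) (r e) dr) /\
      (forall s, u e (xpt (elen src tgt pos e) s) = un (endnode src tgt e s) /\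
                 r e (xpt (elen src tgt pos e) s) = rn (endnode src tgt e s)))
  (* HDG solution *)
  (p : nat) (tau : E -> R) (Htau : forall e, 0 < tau e)
  (ub rb nb mb : E -> vpoly R) (ubn rbn : 'I_K -> vec R)
  (Hdeg : forall e, [/\ polyle p.+1 (ub e), polyle p.+1 (rb e),
                        polyle p.+1 (nb e) & polyle p.+1 (mb e)])
  (HhD : forall a, a \in ND -> ubn a = uD a /\ rbn a = rD a)
  (HhJ : forall a, a \notin ND ->
      jump src tgt a (fun e s => nu s *: veval (nb e) (xpt (elen src tgt pos e) s)
            + tau e *: (veval (ub e) (xpt (elen src tgt pos e) s) - ubn (endnode src tgt e s)))
        = fn a /\
      jump src tgt a (fun e s => nu s *: veval (mb e) (xpt (elen src tgt pos e) s)
            + tau e *: (veval (rb e) (xpt (elen src tgt pos e) s) - rbn (endnode src tgt e s)))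
        = gn a)
  (Hh1 : forall e P, polyle p.+1 P ->
      - ip (elen src tgt pos e) (fun x => invmx (Cn e x) *m veval (nb e) x) (veval P)
      + ip (elen src tgt pos e) (veval (ub e)) (veval (vderiv P))
      - ip (elen src tgt pos e) (fun x => cross (edir src tgt pos e) (veval (rb e) x)) (veval P)
      = bpair (fun s => ubn (endnode src tgt e s))
              (fun s => nu s *: veval P (xpt (elen src tgt pos e) s)))
  (Hh2 : forall e Q, polyle p.+1 Q ->
      - ip (elen src tgt pos e) (fun x => invmx (Cm e x) *m veval (mb e) x) (veval Q)
      + ip (elen src tgt pos e) (veval (rb e)) (veval (vderiv Q))
      = bpair (fun s => rbn (endnode src tgt e s))
              (fun s => nu s *: veval Q (xpt (elen src tgt pos e) s)))
  (Hh3 : forall e V, polyle p.+1 V ->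
      ip (elen src tgt pos e) (veval (vderiv (nb e))) (veval V)
      + tau e * bpair (fun s => veval (ub e) (xpt (elen src tgt pos e) s))
                      (fun s => veval V (xpt (elen src tgt pos e) s))
      = ip (elen src tgt pos e) (fe e) (veval V)
      + tau e * bpair (fun s => ubn (endnode src tgt e s))
                      (fun s => veval V (xpt (elen src tgt pos e) s)))
  (Hh4 : forall e W, polyle p.+1 W ->
      ip (elen src tgt pos e) (fun x => cross (edir src tgt pos e) (veval (nb e) x)) (veval W)
      + ip (elen src tgt pos e) (veval (vderiv (mb e))) (veval W)
      + tau e * bpair (fun s => veval (rb e) (xpt (elen src tgt pos e) s))
                      (fun s => veval W (xpt (elen src tgt pos e) s))
      = ip (elen src tgt pos e) (ge e) (veval W)
      + tau e * bpair (fun s => rbn (endnode src tgt e s))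
                      (fun s => veval W (xpt (elen src tgt pos e) s)))
  (* the projections Pi(u_e, n_e) = (Pu1 e, Pu2 e) and Pi(r_e, m_e) = (Pr1 e, Pr2 e) *)
  (Pu1 Pu2 Pr1 Pr2 : E -> vpoly R)
  (Hproj : forall e,
      is_proj p (tau e) (elen src tgt pos e) (u e) (n e) (Pu1 e) (Pu2 e) /\
      is_proj p (tau e) (elen src tgt pos e) (r e) (m e) (Pr1 e) (Pr2 e)) :
  let h := elen src tgt pos in
  let idir := edir src tgt pos in
  let epsu e := veval (Pu1 e - ub e) in
  let epsn e := veval (Pu2 e - nb e) in
  let epsr e := veval (Pr1 e - rb e) in
  let epsm e := veval (Pr2 e - mb e) in
  let thetan e x := n e x - veval (Pu2 e) x in
  let thetam e x := m e x - veval (Pr2 e) x in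
  (forall e P Q V W, polyle p.+1 P -> polyle p.+1 Q -> polyle p.+1 V -> polyle p.+1 W ->
    [/\ ip (h e) (epsu e) (veval (vderiv P))
        = ip (h e) (fun x => invmx (Cn e x) *m (n e x - veval (nb e) x)) (veval P)
        + ip (h e) (fun x => cross (idir e) (r e x - veval (rb e) x)) (veval P)
        + bpair (fun s => u e (xpt (h e) s) - ubn (endnode src tgt e s))
                (fun s => nu s *: veval P (xpt (h e) s)),
        ip (h e) (epsr e) (veval (vderiv Q))
        = ip (h e) (fun x => invmx (Cm e x) *m (m e x - veval (mb e) x)) (veval Q)
        + bpair (fun s => r e (xpt (h e) s) - rbn (endnode src tgt e s))
                (fun s => nu s *: veval Q (xpt (h e) s)),
        ip (h e) (veval (vderiv (Pu2 e - nb e))) (veval V)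
        = bpair (fun s => tau e *: (veval (ub e) (xpt (h e) s) - ubn (endnode src tgt e s))
                          - nu s *: thetan e (xpt (h e) s))
                (fun s => veval V (xpt (h e) s)) &
        ip (h e) (veval (vderiv (Pr2 e - mb e))) (veval W)
        = bpair (fun s => tau e *: (veval (rb e) (xpt (h e) s) - rbn (endnode src tgt e s))
                          - nu s *: thetam e (xpt (h e) s))
                (fun s => veval W (xpt (h e) s))
        - ip (h e) (fun x => cross (idir e) (n e x - veval (nb e) x)) (veval W)]) /\
  (forall a, a \notin ND -> forall va wa : vec R,
    0 = dot (jump src tgt a (fun e s =>
              nu s *: epsn e (xpt (h e) s) + tau e *: epsu e (xpt (h e) s)
              - tau e *: (u e (xpt (h e) s) - ubn (endnode src tgt e s)))) va
      + dot (jump src tgt a (fun e s =>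
              nu s *: epsm e (xpt (h e) s) + tau e *: epsr e (xpt (h e) s)
              - tau e *: (r e (xpt (h e) s) - rbn (endnode src tgt e s)))) wa).
Proof.
cbv zeta beta.
have h0 : forall e, 0 <= elen src tgt pos e by move=> e; rewrite /elen /vnorm sqrtr_ge0.
have CnB : forall e i j, BM (elen src tgt pos e) (fun x => invmx (Cn e x) i j).
  move=> e; apply: (Cinv_BM Halpha).
  - by move=> x; case: (HCsym e x).
  - by move=> x hx xi; case: (HCbnd e x xi hx) => /andP [] + _ _.
  - by move=> i j; case: (HCmeas e i j).
have CmB : forall e i j, BM (elen src tgt pos e) (fun x => invmx (Cm e x) i j).
  move=> e; apply: (Cinv_BM Halpha).
  - by move=> x; case: (HCsym e x).
  - by move=> x hx xi; case: (HCbnd e x xi hx) => _ /andP [] + _.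
  - by move=> i j; case: (HCmeas e i j).
split.
  move=> e P Q V W HP HQ HV HW.
  have [[_ [_ [Pu Pub]]] [_ [_ [Pr Prb]]]] := Hproj e.
  have [L2u L2r] := Hureg e.
  have [H1n H1m] := Hnreg e.
  have [_ [_ trace]] := Hutrace e.
  have HP' := polyle_deriv HP; have HQ' := polyle_deriv HQ.
  have HV' := polyle_deriv HV; have HW' := polyle_deriv HW.
  split.
  -
    have I1 : Int (elen src tgt pos e) (fun x => dot (veval (Pu1 e) x) (veval (vderiv P) x)).
      by apply: Int_dot; [apply: VB_VI; apply: VB_poly | apply: VB_poly].
    have I2 : Int (elen src tgt pos e) (fun x => dot (veval (ub e) x) (veval (vderiv P) x)).
      by apply: Int_dot; [apply: VB_VI; apply: VB_poly | apply: VB_poly].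
    rewrite veval_sub (ipB_l I1 I2) (Pu _ HP').1.
    have -> : (fun x => invmx (Cn e x) *m (n e x - veval (nb e) x))
            = (fun x => invmx (Cn e x) *m n e x - invmx (Cn e x) *m veval (nb e) x).
      by apply/funext => x; rewrite mulmxBr.
    have I3 : Int (elen src tgt pos e) (fun x => dot (invmx (Cn e x) *m n e x) (veval P x)).
      apply: Int_dot; last exact: VB_poly.
      apply: VI_mul; [exact: CnB | exact: VI_L2 H1n.1].
    have I4 : Int (elen src tgt pos e) (fun x => dot (invmx (Cn e x) *m veval (nb e) x) (veval P x)).
      apply: Int_dot; last exact: VB_poly.
      apply: VB_VI; apply: VB_mul; [exact: CnB | exact: VB_poly].
    rewrite (ipB_l I3 I4).
    have -> : (fun x => cross (edir src tgt pos e) (r e x - veval (rb e) x))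
            = (fun x => cross (edir src tgt pos e) (r e x) - cross (edir src tgt pos e) (veval (rb e) x)).
      by apply/funext => x; rewrite crossBr.
    have I5 : Int (elen src tgt pos e) (fun x => dot (cross (edir src tgt pos e) (r e x)) (veval P x)).
      apply: Int_dot; last exact: VB_poly.
      apply: VI_cross; exact: VI_L2 L2r.
    have I6 : Int (elen src tgt pos e) (fun x => dot (cross (edir src tgt pos e) (veval (rb e) x)) (veval P x)).
      apply: Int_dot; last exact: VB_poly.
      apply: VB_VI; apply: VB_cross; exact: VB_poly.
    rewrite (ipB_l I5 I6).
    have -> : (fun s => u e (xpt (elen src tgt pos e) s) - ubn (endnode src tgt e s))
            = (fun s => un (endnode src tgt e s) - ubn (endnode src tgt e s)).
      by apply/funext => s; rewrite (trace s).1.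
    rewrite bpairBl.
    have e3 := Hex1 e _ _ (H1_poly (elen src tgt pos e) P).
    have e4 := Hh1 e P HP.
    lra.
  -
    have I1 : Int (elen src tgt pos e) (fun x => dot (veval (Pr1 e) x) (veval (vderiv Q) x)).
      by apply: Int_dot; [apply: VB_VI; apply: VB_poly | apply: VB_poly].
    have I2 : Int (elen src tgt pos e) (fun x => dot (veval (rb e) x) (veval (vderiv Q) x)).
      by apply: Int_dot; [apply: VB_VI; apply: VB_poly | apply: VB_poly].
    rewrite veval_sub (ipB_l I1 I2) (Pr _ HQ').1.
    have -> : (fun x => invmx (Cm e x) *m (m e x - veval (mb e) x))
            = (fun x => invmx (Cm e x) *m m e x - invmx (Cm e x) *m veval (mb e) x).
      by apply/funext => x; rewrite mulmxBr.
    have I3 : Int (elen src tgt pos e) (fun x => dot (invmx (Cm e x) *m m e x) (veval Q x)).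
      apply: Int_dot; last exact: VB_poly.
      apply: VI_mul; [exact: CmB | exact: VI_L2 H1m.1].
    have I4 : Int (elen src tgt pos e) (fun x => dot (invmx (Cm e x) *m veval (mb e) x) (veval Q x)).
      apply: Int_dot; last exact: VB_poly.
      apply: VB_VI; apply: VB_mul; [exact: CmB | exact: VB_poly].
    rewrite (ipB_l I3 I4).
    have -> : (fun s => r e (xpt (elen src tgt pos e) s) - rbn (endnode src tgt e s))
            = (fun s => rn (endnode src tgt e s) - rbn (endnode src tgt e s)).
      by apply/funext => s; rewrite (trace s).2.
    rewrite bpairBl.
    have e3 := Hex2 e _ _ (H1_poly (elen src tgt pos e) Q).
    have e4 := Hh2 e Q HQ.
    lra.
  -
    have I1 : Int (elen src tgt pos e) (fun x => dot (veval (vderiv (Pu2 e)) x) (veval V x)).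
      by apply: Int_dot; [apply: VB_VI; apply: VB_poly | apply: VB_poly].
    have I2 : Int (elen src tgt pos e) (fun x => dot (veval (vderiv (nb e)) x) (veval V x)).
      by apply: Int_dot; [apply: VB_VI; apply: VB_poly | apply: VB_poly].
    rewrite vderiv_sub veval_sub (ipB_l I1 I2).
    have r2 := ibp_vec V (h0 e) (H1_poly (elen src tgt pos e) (Pu2 e)).
    have r3 := (Pu _ HV').2.
    have r4 := ibp_vec V (h0 e) H1n.
    have r5 := Hex3 e _ (L2_poly (elen src tgt pos e) V).
    have r6 := Hh3 e V HV.
    have ex : bpair (fun s => tau e *: (veval (ub e) (xpt (elen src tgt pos e) s) - ubn (endnode src tgt e s))
                   - nu s *: (n e (xpt (elen src tgt pos e) s) - veval (Pu2 e) (xpt (elen src tgt pos e) s)))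
                (fun s => veval V (xpt (elen src tgt pos e) s))
      = tau e * bpair (fun s => veval (ub e) (xpt (elen src tgt pos e) s)) (fun s => veval V (xpt (elen src tgt pos e) s))
      - tau e * bpair (fun s => ubn (endnode src tgt e s)) (fun s => veval V (xpt (elen src tgt pos e) s))
      - bpair (fun s => nu s *: n e (xpt (elen src tgt pos e) s)) (fun s => veval V (xpt (elen src tgt pos e) s))
      + bpair (fun s => nu s *: veval (Pu2 e) (xpt (elen src tgt pos e) s)) (fun s => veval V (xpt (elen src tgt pos e) s)).
      by rewrite /bpair /dot !big_ord_recr !big_ord0 /= !mxE; ring.
    rewrite ex; lra.
  -
    have I1 : Int (elen src tgt pos e) (fun x => dot (veval (vderiv (Pr2 e)) x) (veval W x)).
      by apply: Int_dot; [apply: VB_VI; apply: VB_poly | apply: VB_poly].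
    have I2 : Int (elen src tgt pos e) (fun x => dot (veval (vderiv (mb e)) x) (veval W x)).
      by apply: Int_dot; [apply: VB_VI; apply: VB_poly | apply: VB_poly].
    rewrite vderiv_sub veval_sub (ipB_l I1 I2).
    have -> : (fun x => cross (edir src tgt pos e) (n e x - veval (nb e) x))
            = (fun x => cross (edir src tgt pos e) (n e x) - cross (edir src tgt pos e) (veval (nb e) x)).
      by apply/funext => x; rewrite crossBr.
    have I5 : Int (elen src tgt pos e) (fun x => dot (cross (edir src tgt pos e) (n e x)) (veval W x)).
      apply: Int_dot; last exact: VB_poly.
      apply: VI_cross; exact: VI_L2 H1n.1.
    have I6 : Int (elen src tgt pos e) (fun x => dot (cross (edir src tgt pos e) (veval (nb e) x)) (veval W x)).
      apply: Int_dot; last exact: VB_poly.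
      apply: VB_VI; apply: VB_cross; exact: VB_poly.
    rewrite (ipB_l I5 I6).
    have r2 := ibp_vec W (h0 e) (H1_poly (elen src tgt pos e) (Pr2 e)).
    have r3 := (Pr _ HW').2.
    have r4 := ibp_vec W (h0 e) H1m.
    have r5 := Hex4 e _ (L2_poly (elen src tgt pos e) W).
    have r6 := Hh4 e W HW.
    have ex : bpair (fun s => tau e *: (veval (rb e) (xpt (elen src tgt pos e) s) - rbn (endnode src tgt e s))
                   - nu s *: (m e (xpt (elen src tgt pos e) s) - veval (Pr2 e) (xpt (elen src tgt pos e) s)))
                (fun s => veval W (xpt (elen src tgt pos e) s))
      = tau e * bpair (fun s => veval (rb e) (xpt (elen src tgt pos e) s)) (fun s => veval W (xpt (elen src tgt pos e) s))
      - tau e * bpair (fun s => rbn (endnode src tgt e s)) (fun s => veval W (xpt (elen src tgt pos e) s))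
      - bpair (fun s => nu s *: m e (xpt (elen src tgt pos e) s)) (fun s => veval W (xpt (elen src tgt pos e) s))
      + bpair (fun s => nu s *: veval (Pr2 e) (xpt (elen src tgt pos e) s)) (fun s => veval W (xpt (elen src tgt pos e) s)).
      by rewrite /bpair /dot !big_ord_recr !big_ord0 /= !mxE; ring.
    rewrite ex; lra.
move=> a Ha va wa.
have [J1 J2] := HexJ a Ha.
have [K1 K2] := HhJ a Ha.
have E1 : (fun e s => nu s *: veval (Pu2 e - nb e) (xpt (elen src tgt pos e) s)
            + tau e *: veval (Pu1 e - ub e) (xpt (elen src tgt pos e) s)
            - tau e *: (u e (xpt (elen src tgt pos e) s) - ubn (endnode src tgt e s)))
  = (fun e s => nu s *: n e (xpt (elen src tgt pos e) s)
       - (nu s *: veval (nb e) (xpt (elen src tgt pos e) s)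
          + tau e *: (veval (ub e) (xpt (elen src tgt pos e) s) - ubn (endnode src tgt e s)))).
  apply/funext => e; apply/funext => s.
  have [[_ [_ [_ Pub]]] _] := Hproj e.
  have key := Pub s.
  rewrite !veval_sub /=; apply/matrixP => i j.
  have := congr1 (fun M : vec R => M i j) key; rewrite !mxE => k.
  lra.
have E2 : (fun e s => nu s *: veval (Pr2 e - mb e) (xpt (elen src tgt pos e) s)
            + tau e *: veval (Pr1 e - rb e) (xpt (elen src tgt pos e) s)
            - tau e *: (r e (xpt (elen src tgt pos e) s) - rbn (endnode src tgt e s)))
  = (fun e s => nu s *: m e (xpt (elen src tgt pos e) s)
       - (nu s *: veval (mb e) (xpt (elen src tgt pos e) s)
          + tau e *: (veval (rb e) (xpt (elen src tgt pos e) s) - rbn (endnode src tgt e s)))).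
  apply/funext => e; apply/funext => s.
  have [_ [_ [_ [_ Prb]]]] := Hproj e.
  have key := Prb s.
  rewrite !veval_sub /=; apply/matrixP => i j.
  have := congr1 (fun M : vec R => M i j) key; rewrite !mxE => k.
  lra.
rewrite E1 E2 !jumpB J1 J2 K1 K2 !subrr !dot0l; ring.
Qed.
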